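(* Let $\mathcal{K}$ be a $2$-category with pseudolimits of arrows, and $U\colon\mathcal{L}\to\mathcal{K}$ a $2$-functor which (1) has the equivalence lifting property: if $A\in\mathcal{L}$ and $u\colon L\to UA$ is an equivalence in $\mathcal{K}$, then there is an equivalence $\overline{u}\colon\overline{L}\to A$ in $\mathcal{L}$ with $U\overline{u}=u$; and (2) acts as a discrete isofibration of categories $\mathcal{L}(A,B)\to\mathcal{K}(UA,UB)$ on hom-categories. Then $\mathcal{L}$ has pseudolimits of arrows and $U$ preserves them. Consequently, if $\mathcal{K}$ satisfies the normal isofibration property, then so does $\mathcal{L}$.
   Context: An equivalence is a morphism $f\colon A\to B$ with $g\colon B\to A$ and invertible $2$-cells $1\cong gf$, $fg\cong 1$. A functor is a discrete isofibration of categories if every isomorphism with codomain in the image has a unique lift with the given codomain. The pseudolimit of an arrow $f\colon A\to B$ is an object $L_f$ with $u_f\colon L_f\to A$, $v_f\colon L_f\to B$ and invertible $\lambda_f\colon v_f\cong fu_f$, universal among such data (in both the $1$- and $2$-dimensional sense). A $2$-category has the normal isofibration property if every representable isofibration in it is a normal isofibration. A morphism $f\colon A\to B$ is a representable isofibration if for every object $X$, given $g\colon X\to A$, $h\colon X\to B$ and invertible $\alpha\colon fg\cong h$, there exist $h'\colon X\to A$ and invertible $\alpha'\colon g\cong h'$ with $f\alpha'=\alpha$. A cleavage is a choice of such $(\alpha',h')$ for every $(g,\alpha,h)$, natural in $X$; it is normal if $\alpha'$ is an identity whenever $\alpha$ is. A normal isofibration is a representable isofibration admitting a normal cleavage. 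*)

(* Defs.v *)
Set Implicit Arguments.
Unset Strict Implicit.

(* A (strict) 2-category, presented "fibred": for objects A B, [Hom A B] is
   the type of 1-cells and [Cell A B] the type of all 2-cells between
   1-cells A -> B, each 2-cell having a source [src2] and target [tgt2].
   Vertical composition [vcomp b a] (= b . a, first a then b) is a total
   operation, only constrained when [tgt2 a = src2 b]; horizontal
   composition [hcomp b a] (b after a) is always defined. *)
Record TwoCat := {
  Ob : Type;
  Hom : Ob -> Ob -> Type;
  Cell : Ob -> Ob -> Type;
  id1 : forall A, Hom A A;
  comp1 : forall A B C, Hom B C -> Hom A B -> Hom A C;
  src2 : forall A B, Cell A B -> Hom A B;
  tgt2 : forall A B, Cell A B -> Hom A B;
  id2 : forall A B, Hom A B -> Cell A B;
  vcomp : forall A B, Cell A B -> Cell A B -> Cell A B;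
  hcomp : forall A B C, Cell B C -> Cell A B -> Cell A C;
  comp1_assoc : forall A B C D (h : Hom C D) (g : Hom B C) (f : Hom A B),
      comp1 h (comp1 g f) = comp1 (comp1 h g) f;
  comp1_id_l : forall A B (f : Hom A B), comp1 (id1 B) f = f;
  comp1_id_r : forall A B (f : Hom A B), comp1 f (id1 A) = f;
  src_id2 : forall A B (f : Hom A B), src2 (id2 f) = f;
  tgt_id2 : forall A B (f : Hom A B), tgt2 (id2 f) = f;
  src_vcomp : forall A B (b a : Cell A B),
      tgt2 a = src2 b -> src2 (vcomp b a) = src2 a;
  tgt_vcomp : forall A B (b a : Cell A B),
      tgt2 a = src2 b -> tgt2 (vcomp b a) = tgt2 b;
  vcomp_assoc : forall A B (c b a : Cell A B),
      tgt2 a = src2 b -> tgt2 b = src2 c ->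
      vcomp c (vcomp b a) = vcomp (vcomp c b) a;
  vcomp_id_l : forall A B (a : Cell A B), vcomp (id2 (tgt2 a)) a = a;
  vcomp_id_r : forall A B (a : Cell A B), vcomp a (id2 (src2 a)) = a;
  src_hcomp : forall A B C (b : Cell B C) (a : Cell A B),
      src2 (hcomp b a) = comp1 (src2 b) (src2 a);
  tgt_hcomp : forall A B C (b : Cell B C) (a : Cell A B),
      tgt2 (hcomp b a) = comp1 (tgt2 b) (tgt2 a);
  hcomp_assoc : forall A B C D (c : Cell C D) (b : Cell B C) (a : Cell A B),
      hcomp c (hcomp b a) = hcomp (hcomp c b) a;
  hcomp_id_l : forall A B (a : Cell A B), hcomp (id2 (id1 B)) a = a;
  hcomp_id_r : forall A B (a : Cell A B), hcomp a (id2 (id1 A)) = a;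
  hcomp_id2 : forall A B C (g : Hom B C) (f : Hom A B),
      hcomp (id2 g) (id2 f) = id2 (comp1 g f);
  interchange : forall A B C (b b' : Cell B C) (a a' : Cell A B),
      tgt2 a = src2 a' -> tgt2 b = src2 b' ->
      hcomp (vcomp b' b) (vcomp a' a) = vcomp (hcomp b' a') (hcomp b a)
}.

Arguments Hom : clear implicits.
Arguments Cell : clear implicits.
Arguments id1 {t} A.
Arguments comp1 {t A B C} _ _.
Arguments src2 {t A B} _.
Arguments tgt2 {t A B} _.
Arguments id2 {t A B} _.
Arguments vcomp {t A B} _ _.
Arguments hcomp {t A B C} _ _.

Section Notions.
Variable K : TwoCat.

Definition whiskL {A B C : Ob K} (h : Hom K B C) (a : Cell K A B) : Cell K A C :=
  hcomp (id2 h) a.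
Definition whiskR {A B C : Ob K} (a : Cell K B C) (h : Hom K A B) : Cell K A C :=
  hcomp a (id2 h).

Definition invertible {A B : Ob K} (a : Cell K A B) : Prop :=
  exists b : Cell K A B,
    src2 b = tgt2 a /\ tgt2 b = src2 a /\
    vcomp b a = id2 (src2 a) /\ vcomp a b = id2 (tgt2 a).

Definition equivalence {A B : Ob K} (f : Hom K A B) : Prop :=
  exists (g : Hom K B A) (eta : Cell K A A) (eps : Cell K B B),
    src2 eta = id1 A /\ tgt2 eta = comp1 g f /\ invertible eta /\
    src2 eps = comp1 f g /\ tgt2 eps = id1 B /\ invertible eps.

Definition is_arrow_pseudolimit {A B : Ob K} (f : Hom K A B)
    (L : Ob K) (u : Hom K L A) (v : Hom K L B) (lam : Cell K L B) : Prop :=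
  (src2 lam = v /\ tgt2 lam = comp1 f u /\ invertible lam) /\
  (forall (X : Ob K) (p : Hom K X A) (q : Hom K X B) (th : Cell K X B),
      src2 th = q -> tgt2 th = comp1 f p -> invertible th ->
      exists h : Hom K X L,
        (comp1 u h = p /\ comp1 v h = q /\ whiskR lam h = th) /\
        forall h' : Hom K X L,
          comp1 u h' = p -> comp1 v h' = q -> whiskR lam h' = th -> h' = h) /\
  (forall (X : Ob K) (h k : Hom K X L) (al : Cell K X A) (be : Cell K X B),
      src2 al = comp1 u h -> tgt2 al = comp1 u k ->
      src2 be = comp1 v h -> tgt2 be = comp1 v k ->
      vcomp (whiskL f al) (whiskR lam h) = vcomp (whiskR lam k) be ->
      exists ga : Cell K X L,
        (src2 ga = h /\ tgt2 ga = k /\ whiskL u ga = al /\ whiskL v ga = be) /\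
        forall ga' : Cell K X L,
          src2 ga' = h -> tgt2 ga' = k -> whiskL u ga' = al ->
          whiskL v ga' = be -> ga' = ga).

Definition has_arrow_pseudolimits : Prop :=
  forall (A B : Ob K) (f : Hom K A B),
    exists (L : Ob K) (u : Hom K L A) (v : Hom K L B) (lam : Cell K L B),
      is_arrow_pseudolimit f u v lam.

Definition rep_isofibration {A B : Ob K} (f : Hom K A B) : Prop :=
  forall (X : Ob K) (g : Hom K X A) (h : Hom K X B) (al : Cell K X B),
    src2 al = comp1 f g -> tgt2 al = h -> invertible al ->
    exists (h' : Hom K X A) (al' : Cell K X A),
      src2 al' = g /\ tgt2 al' = h' /\ invertible al' /\ whiskL f al' = al.

(* A cleavage for f: for each X, g : X -> A and invertible al : f g => h
   (h is determined as tgt2 al) a choice (h', al'), natural in X. *)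
Definition is_cleavage {A B : Ob K} (f : Hom K A B)
    (cl : forall X : Ob K, Hom K X A -> Cell K X B -> Hom K X A * Cell K X A)
    : Prop :=
  (forall (X : Ob K) (g : Hom K X A) (al : Cell K X B),
      src2 al = comp1 f g -> invertible al ->
      src2 (snd (cl X g al)) = g /\ tgt2 (snd (cl X g al)) = fst (cl X g al) /\
      invertible (snd (cl X g al)) /\ whiskL f (snd (cl X g al)) = al) /\
  (forall (Y X : Ob K) (k : Hom K Y X) (g : Hom K X A) (al : Cell K X B),
      src2 al = comp1 f g -> invertible al ->
      cl Y (comp1 g k) (whiskR al k) =
        (comp1 (fst (cl X g al)) k, whiskR (snd (cl X g al)) k)).

Definition is_normal_cleavage {A B : Ob K} (f : Hom K A B)
    (cl : forall X : Ob K, Hom K X A -> Cell K X B -> Hom K X A * Cell K X A)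
    : Prop :=
  is_cleavage f cl /\
  forall (X : Ob K) (g : Hom K X A),
    snd (cl X g (id2 (comp1 f g))) = id2 g.

Definition normal_isofibration {A B : Ob K} (f : Hom K A B) : Prop :=
  rep_isofibration f /\ exists cl, is_normal_cleavage f cl.

Definition normal_isofibration_property : Prop :=
  forall (A B : Ob K) (f : Hom K A B), rep_isofibration f -> normal_isofibration f.

End Notions.

Record TwoFunctor (L K : TwoCat) := {
  F0 : Ob L -> Ob K;
  F1 : forall A B, Hom L A B -> Hom K (F0 A) (F0 B);
  F2 : forall A B, Cell L A B -> Cell K (F0 A) (F0 B);
  F1_id : forall A, F1 (id1 A) = id1 (F0 A);
  F1_comp : forall A B C (g : Hom L B C) (f : Hom L A B),
      F1 (comp1 g f) = comp1 (F1 g) (F1 f);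
  F2_src : forall A B (a : Cell L A B), src2 (F2 a) = F1 (src2 a);
  F2_tgt : forall A B (a : Cell L A B), tgt2 (F2 a) = F1 (tgt2 a);
  F2_id : forall A B (f : Hom L A B), F2 (id2 f) = id2 (F1 f);
  F2_vcomp : forall A B (b a : Cell L A B),
      tgt2 a = src2 b -> F2 (vcomp b a) = vcomp (F2 b) (F2 a);
  F2_hcomp : forall A B C (b : Cell L B C) (a : Cell L A B),
      F2 (hcomp b a) = hcomp (F2 b) (F2 a)
}.

Arguments F0 {L K} _ _.
Arguments F1 {L K} _ {A B} _.
Arguments F2 {L K} _ {A B} _.

Section FunctorNotions.
Variables (L K : TwoCat) (U : TwoFunctor L K).

Definition equivalence_lifting : Prop :=
  forall (A : Ob L) (X : Ob K) (u : Hom K X (F0 U A)),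
    equivalence u ->
    exists (Xb : Ob L) (ub : Hom L Xb A),
      equivalence ub /\
      existT (fun Y => Hom K Y (F0 U A)) (F0 U Xb) (F1 U ub) =
      existT (fun Y => Hom K Y (F0 U A)) X u.

Definition hom_discrete_isofibration : Prop :=
  forall (A B : Ob L) (g : Hom L A B) (th : Cell K (F0 U A) (F0 U B)),
    tgt2 th = F1 U g -> invertible th ->
    exists al : Cell L A B,
      (tgt2 al = g /\ invertible al /\ F2 U al = th) /\
      forall al' : Cell L A B,
        tgt2 al' = g -> invertible al' -> F2 U al' = th -> al' = al.

Definition preserves_arrow_pseudolimits : Prop :=
  forall (A B : Ob L) (f : Hom L A B) (X : Ob L) (u : Hom L X A)
         (v : Hom L X B) (lam : Cell L X B),
    is_arrow_pseudolimit f u v lam ->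
    is_arrow_pseudolimit (F1 U f) (F1 U u) (F1 U v) (F2 U lam).

End FunctorNotions.

(* Main.v *)
Require Import Defs.
From Stdlib Require Import ClassicalEpsilon Eqdep.

Set Implicit Arguments.
Unset Strict Implicit.

Section Gen.
Context {C : TwoCat}.

Lemma src_whiskL A B D (h : Hom C B D) (a : Cell C A B) : src2 (whiskL h a) = comp1 h (src2 a).
Proof. unfold whiskL. rewrite src_hcomp, src_id2. reflexivity. Qed.
Lemma tgt_whiskL A B D (h : Hom C B D) (a : Cell C A B) : tgt2 (whiskL h a) = comp1 h (tgt2 a).
Proof. unfold whiskL. rewrite tgt_hcomp, tgt_id2. reflexivity. Qed.
Lemma src_whiskR A B D (a : Cell C B D) (h : Hom C A B) : src2 (whiskR a h) = comp1 (src2 a) h.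
Proof. unfold whiskR. rewrite src_hcomp, src_id2. reflexivity. Qed.
Lemma tgt_whiskR A B D (a : Cell C B D) (h : Hom C A B) : tgt2 (whiskR a h) = comp1 (tgt2 a) h.
Proof. unfold whiskR. rewrite tgt_hcomp, tgt_id2. reflexivity. Qed.

Lemma vid_l A B (f : Hom C A B) a : tgt2 a = f -> vcomp (id2 f) a = a.
Proof. intros <-. apply vcomp_id_l. Qed.
Lemma vid_r A B (f : Hom C A B) a : src2 a = f -> vcomp a (id2 f) = a.
Proof. intros <-. apply vcomp_id_r. Qed.
Lemma vid_id A B (f : Hom C A B) : vcomp (id2 f) (id2 f) = id2 f.
Proof. apply vid_l. apply tgt_id2. Qed.

Lemma whiskL_vcomp A B D (h : Hom C B D) (b a : Cell C A B) :
  tgt2 a = src2 b -> whiskL h (vcomp b a) = vcomp (whiskL h b) (whiskL h a).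
Proof. intros E. unfold whiskL. rewrite <- interchange; try rewrite tgt_id2, src_id2; auto.
  rewrite vid_id. reflexivity. Qed.
Lemma whiskR_vcomp A B D (b a : Cell C B D) (h : Hom C A B) :
  tgt2 a = src2 b -> whiskR (vcomp b a) h = vcomp (whiskR b h) (whiskR a h).
Proof. intros E. unfold whiskR. rewrite <- interchange; try rewrite tgt_id2, src_id2; auto.
  rewrite vid_id. reflexivity. Qed.
Lemma whiskL_id2 A B D (h : Hom C B D) (f : Hom C A B) : whiskL h (id2 f) = id2 (comp1 h f).
Proof. apply hcomp_id2. Qed.
Lemma whiskR_id2 A B D (f : Hom C B D) (h : Hom C A B) : whiskR (id2 f) h = id2 (comp1 f h).
Proof. apply hcomp_id2. Qed.
Lemma whiskL_whiskL A B D E (g : Hom C D E) (h : Hom C B D) (a : Cell C A B) :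
  whiskL g (whiskL h a) = whiskL (comp1 g h) a.
Proof. unfold whiskL. rewrite hcomp_assoc, hcomp_id2. reflexivity. Qed.
Lemma whiskR_whiskR A B D E (a : Cell C D E) (h : Hom C B D) (k : Hom C A B) :
  whiskR (whiskR a h) k = whiskR a (comp1 h k).
Proof. unfold whiskR. rewrite <- hcomp_assoc, hcomp_id2. reflexivity. Qed.
Lemma whiskR_whiskL A B D E (h : Hom C D E) (a : Cell C B D) (k : Hom C A B) :
  whiskR (whiskL h a) k = whiskL h (whiskR a k).
Proof. unfold whiskR, whiskL. rewrite hcomp_assoc. reflexivity. Qed.
Lemma whiskL_id1 A B (a : Cell C A B) : whiskL (id1 B) a = a.
Proof. apply hcomp_id_l. Qed.
Lemma whiskR_id1 A B (a : Cell C A B) : whiskR a (id1 A) = a.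
Proof. apply hcomp_id_r. Qed.

Lemma hcomp_nat1 A B D (b : Cell C B D) (a : Cell C A B) :
  hcomp b a = vcomp (whiskL (tgt2 b) a) (whiskR b (src2 a)).
Proof. unfold whiskL, whiskR. rewrite <- interchange.
  - rewrite vcomp_id_l, vcomp_id_r. reflexivity.
  - rewrite tgt_id2. reflexivity.
  - rewrite src_id2. reflexivity. Qed.
Lemma hcomp_nat2 A B D (b : Cell C B D) (a : Cell C A B) :
  hcomp b a = vcomp (whiskR b (tgt2 a)) (whiskL (src2 b) a).
Proof. unfold whiskL, whiskR. rewrite <- interchange.
  - rewrite vcomp_id_l, vcomp_id_r. reflexivity.
  - rewrite src_id2. reflexivity.
  - rewrite tgt_id2. reflexivity. Qed.
Lemma whisk_nat A B D (b : Cell C B D) (a : Cell C A B) :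
  vcomp (whiskL (tgt2 b) a) (whiskR b (src2 a)) = vcomp (whiskR b (tgt2 a)) (whiskL (src2 b) a).
Proof. rewrite <- hcomp_nat1, <- hcomp_nat2. reflexivity. Qed.

End Gen.

Section Inv.
Context {C : TwoCat}.

Definition inv {C : TwoCat} {A B} (a : Cell C A B) : Cell C A B :=
  epsilon (inhabits a) (fun b => src2 b = tgt2 a /\ tgt2 b = src2 a /\
    vcomp b a = id2 (src2 a) /\ vcomp a b = id2 (tgt2 a)).

Lemma inv_spec A B (a : Cell C A B) : invertible a ->
  src2 (inv a) = tgt2 a /\ tgt2 (inv a) = src2 a /\
  vcomp (inv a) a = id2 (src2 a) /\ vcomp a (inv a) = id2 (tgt2 a).
Proof. intros H. unfold inv. apply epsilon_spec. exact H. Qed.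

Lemma src_inv A B (a : Cell C A B) : invertible a -> src2 (inv a) = tgt2 a.
Proof. intros H; apply (inv_spec H). Qed.
Lemma tgt_inv A B (a : Cell C A B) : invertible a -> tgt2 (inv a) = src2 a.
Proof. intros H; apply (inv_spec H). Qed.
Lemma vinv_l A B (a : Cell C A B) : invertible a -> vcomp (inv a) a = id2 (src2 a).
Proof. intros H; apply (inv_spec H). Qed.
Lemma vinv_r A B (a : Cell C A B) : invertible a -> vcomp a (inv a) = id2 (tgt2 a).
Proof. intros H; apply (inv_spec H). Qed.
Lemma invertible_inv A B (a : Cell C A B) : invertible a -> invertible (inv a).
Proof. intros H. destruct (inv_spec H) as (E1 & E2 & E3 & E4). exists a.
  rewrite E1, E2. auto. Qed.

Lemma inv_unique A B (a b : Cell C A B) : invertible a ->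
  src2 b = tgt2 a -> tgt2 b = src2 a -> vcomp b a = id2 (src2 a) -> b = inv a.
Proof. intros H E1 E2 E3. destruct (inv_spec H) as (F1 & F2 & F3 & F4).
  transitivity (vcomp b (vcomp a (inv a))).
  - rewrite F4. rewrite vid_r; auto.
  - rewrite vcomp_assoc; try congruence. rewrite E3. apply vid_l. auto. Qed.

Lemma inv_unique_r A B (a b : Cell C A B) : invertible a ->
  src2 b = tgt2 a -> tgt2 b = src2 a -> vcomp a b = id2 (tgt2 a) -> b = inv a.
Proof. intros H E1 E2 E3. destruct (inv_spec H) as (F1 & F2 & F3 & F4).
  transitivity (vcomp (vcomp (inv a) a) b).
  - rewrite F3. rewrite vid_l; auto.
  - rewrite <- vcomp_assoc; try congruence. rewrite E3. apply vid_r. auto. Qed.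

Lemma inv_inv A B (a : Cell C A B) : invertible a -> inv (inv a) = a.
Proof. intros H. destruct (inv_spec H) as (F1 & F2 & F3 & F4).
  symmetry. apply inv_unique. apply invertible_inv; auto. auto. auto.
  rewrite F4, F1. reflexivity. Qed.

Lemma invertible_id2 A B (f : Hom C A B) : invertible (id2 f).
Proof. exists (id2 f). rewrite !src_id2, !tgt_id2, vid_id. auto. Qed.
Lemma inv_id2 A B (f : Hom C A B) : inv (id2 f) = id2 f.
Proof. symmetry. apply inv_unique. apply invertible_id2.
  all: rewrite ?src_id2, ?tgt_id2, ?vid_id; auto. Qed.

End Inv.

Lemma invertible_vcomp {C : TwoCat} A B (b a : Cell C A B) : tgt2 a = src2 b ->
  invertible a -> invertible b -> invertible (vcomp b a).
Proof. intros E Ha Hb. destruct (inv_spec Ha) as (A1 & A2 & A3 & A4).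
  destruct (inv_spec Hb) as (B1 & B2 & B3 & B4).
  exists (vcomp (inv a) (inv b)).
  rewrite !src_vcomp, !tgt_vcomp; try congruence.
  split; [auto|split;[auto|split]].
  - rewrite <- (vcomp_assoc (c := inv a)); [| rewrite tgt_vcomp; congruence | congruence].
    rewrite (vcomp_assoc (c:=inv b)); try congruence.
    rewrite B3, vid_l by congruence. exact A3.
  - rewrite <- (vcomp_assoc (c := b)); [| rewrite tgt_vcomp; congruence | congruence].
    rewrite (vcomp_assoc (c := a)); try congruence.
    rewrite A4, vid_l by congruence. exact B4.
Qed.

Section Gen2.
Context {C : TwoCat}.
Lemma invertible_whiskL A B D (h : Hom C B D) (a : Cell C A B) :
  invertible a -> invertible (whiskL h a).
Proof. intros H. destruct (inv_spec H) as (A1 & A2 & A3 & A4). exists (whiskL h (inv a)).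
  rewrite !src_whiskL, !tgt_whiskL, <- !whiskL_vcomp, A1, A2, A3, A4, !whiskL_id2; auto. Qed.
Lemma invertible_whiskR A B D (a : Cell C B D) (h : Hom C A B) :
  invertible a -> invertible (whiskR a h).
Proof. intros H. destruct (inv_spec H) as (A1 & A2 & A3 & A4). exists (whiskR (inv a) h).
  rewrite !src_whiskR, !tgt_whiskR, <- !whiskR_vcomp, A1, A2, A3, A4, !whiskR_id2; auto. Qed.
Lemma inv_whiskL A B D (h : Hom C B D) (a : Cell C A B) :
  invertible a -> inv (whiskL h a) = whiskL h (inv a).
Proof. intros H. destruct (inv_spec H) as (A1 & A2 & A3 & A4). symmetry. apply inv_unique.
  apply invertible_whiskL; auto.
  all: rewrite ?src_whiskL, ?tgt_whiskL, <- ?whiskL_vcomp, ?A1, ?A2, ?A3, ?whiskL_id2; auto. Qed.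
Lemma inv_whiskR A B D (a : Cell C B D) (h : Hom C A B) :
  invertible a -> inv (whiskR a h) = whiskR (inv a) h.
Proof. intros H. destruct (inv_spec H) as (A1 & A2 & A3 & A4). symmetry. apply inv_unique.
  apply invertible_whiskR; auto.
  all: rewrite ?src_whiskR, ?tgt_whiskR, <- ?whiskR_vcomp, ?A1, ?A2, ?A3, ?whiskR_id2; auto. Qed.

End Gen2.
Lemma comp1_ext {C : TwoCat} A B D (x : Hom C B D) (y : Hom C A B) z :
  comp1 x y = z -> forall E (w : Hom C E A), comp1 x (comp1 y w) = comp1 z w.
Proof. intros <- E w. apply comp1_assoc. Qed.

Ltac rwhyps := repeat match goal with
 | H : src2 _ = ?r |- _ => lazymatch r with src2 _ => fail | tgt2 _ => fail | _ => progress rewrite !H end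
 | H : tgt2 _ = ?r |- _ => lazymatch r with src2 _ => fail | tgt2 _ => fail | _ => progress rewrite !H end
 | H : comp1 _ _ = _ |- _ => progress rewrite ?H, ?(comp1_ext H)
 end.
Ltac st_step := rewrite ?src_id2, ?tgt_id2, ?src_hcomp, ?tgt_hcomp, ?src_whiskL, ?tgt_whiskL,
   ?src_whiskR, ?tgt_whiskR, ?F2_src, ?F2_tgt, ?F1_comp, ?F1_id,
   ?comp1_id_l, ?comp1_id_r, <- ?comp1_assoc.
Ltac st_step_in := rewrite ?comp1_id_l, ?comp1_id_r, <- ?comp1_assoc, ?F1_comp, ?F1_id in *.
Ltac st := solve [intros; try (st_step_in); repeat progress (st_step; rwhyps;
    try (rewrite src_vcomp by st); try (rewrite tgt_vcomp by st);
    try (rewrite src_inv by inv_tac); try (rewrite tgt_inv by inv_tac));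
    first [reflexivity | congruence]]
with inv_tac := solve [repeat (first [assumption | apply invertible_inv | apply invertible_id2
    | apply invertible_whiskL | apply invertible_whiskR
    | apply invertible_vcomp; [st | .. ] ])].

Section Gen3.
Context {C : TwoCat}.
Lemma vinv_l_assoc A B (a x : Cell C A B) : invertible a -> tgt2 x = src2 a ->
  vcomp (inv a) (vcomp a x) = x.
Proof. intros H E. rewrite vcomp_assoc by st. rewrite vinv_l by inv_tac. apply vid_l; st. Qed.
Lemma vinv_r_assoc A B (a x : Cell C A B) : invertible a -> tgt2 x = tgt2 a ->
  vcomp a (vcomp (inv a) x) = x.
Proof. intros H E. rewrite vcomp_assoc by st. rewrite vinv_r by inv_tac. apply vid_l; st. Qed.

Lemma vcancel_l A B (a x y : Cell C A B) : invertible a -> tgt2 x = src2 a -> tgt2 y = src2 a ->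
  vcomp a x = vcomp a y -> x = y.
Proof. intros H E1 E2 E. rewrite <- (vinv_l_assoc H E1), <- (vinv_l_assoc H E2), E. reflexivity. Qed.
Lemma vcancel_r A B (a x y : Cell C A B) : invertible a -> src2 x = tgt2 a -> src2 y = tgt2 a ->
  vcomp x a = vcomp y a -> x = y.
Proof. intros H E1 E2 E. destruct (inv_spec H) as (A1 & A2 & A3 & A4).
  rewrite <- (@vid_r _ _ _ (tgt2 a) x), <- (@vid_r _ _ _ (tgt2 a) y), <- A4 by auto.
  rewrite !vcomp_assoc by st. rewrite E. reflexivity. Qed.

End Gen3.

Set Implicit Arguments.
Unset Strict Implicit.

Section Fun.
Context {L K : TwoCat} (U : TwoFunctor L K).
Lemma F2_whiskL A B D (h : Hom L B D) (a : Cell L A B) :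
  F2 U (whiskL h a) = whiskL (F1 U h) (F2 U a).
Proof. unfold whiskL. rewrite F2_hcomp, F2_id. reflexivity. Qed.
Lemma F2_whiskR A B D (a : Cell L B D) (h : Hom L A B) :
  F2 U (whiskR a h) = whiskR (F2 U a) (F1 U h).
Proof. unfold whiskR. rewrite F2_hcomp, F2_id. reflexivity. Qed.
Lemma F2_invertible A B (a : Cell L A B) : invertible a -> invertible (F2 U a).
Proof. intros (b & E1 & E2 & E3 & E4). exists (F2 U b).
  rewrite <- !F2_vcomp by congruence. rewrite E3, E4, !F2_id, !F2_src, !F2_tgt, E1, E2. auto. Qed.
Lemma F2_inv A B (a : Cell L A B) : invertible a -> F2 U (inv a) = inv (F2 U a).
Proof. intros H. apply inv_unique. apply F2_invertible; auto. st. st.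
  rewrite <- F2_vcomp by st. rewrite vinv_l by auto. rewrite F2_id, F2_src. reflexivity. Qed.
End Fun.

Set Implicit Arguments.
Unset Strict Implicit.

Section PL.
Context {C : TwoCat}.

Lemma conj_lemma A B (a c x y : Cell C A B) : invertible a -> invertible c ->
  tgt2 x = src2 c -> src2 y = tgt2 a -> src2 x = src2 a -> tgt2 y = tgt2 c ->
  vcomp c x = vcomp y a ->
  vcomp x (inv a) = vcomp (inv c) y.
Proof. intros Ha Hc E1 E2 E3 E4 E.
  rewrite <- (vinv_l_assoc Hc E1). rewrite <- vcomp_assoc by st. rewrite E.
  rewrite <- vcomp_assoc by st. rewrite vinv_r by auto. rewrite vid_r by st. reflexivity. Qed.

Lemma cone_nat A B P (f : Hom C A B) (u : Hom C P A) (v : Hom C P B) (lam : Cell C P B)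
  X (h k : Hom C X P) (ga : Cell C X P) :
  src2 lam = v -> tgt2 lam = comp1 f u -> src2 ga = h -> tgt2 ga = k ->
  vcomp (whiskL f (whiskL u ga)) (whiskR lam h) = vcomp (whiskR lam k) (whiskL v ga).
Proof. intros E1 E2 E3 E4. rewrite whiskL_whiskL, <- E2, <- E3, <- E4, <- E1. apply whisk_nat. Qed.

Lemma pl_cell_unique A B P (f : Hom C A B) (u : Hom C P A) (v : Hom C P B) (lam : Cell C P B) :
  is_arrow_pseudolimit f u v lam ->
  forall X (h k : Hom C X P) (ga1 ga2 : Cell C X P),
  src2 ga1 = h -> tgt2 ga1 = k -> src2 ga2 = h -> tgt2 ga2 = k ->
  whiskL u ga1 = whiskL u ga2 -> whiskL v ga1 = whiskL v ga2 -> ga1 = ga2.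
Proof. intros ((E1&E2&Hi)&_&H2) X h k ga1 ga2 S1 T1 S2 T2 Eu Ev.
  destruct (H2 X h k (whiskL u ga1) (whiskL v ga1)) as (ga & _ & Hu); try st.
  - apply cone_nat; auto.
  - rewrite (Hu ga1), (Hu ga2); auto. Qed.

Lemma pl_reflect_inv A B P (f : Hom C A B) (u : Hom C P A) (v : Hom C P B) (lam : Cell C P B) :
  is_arrow_pseudolimit f u v lam ->
  forall X (h k : Hom C X P) (ga : Cell C X P),
  src2 ga = h -> tgt2 ga = k -> invertible (whiskL u ga) -> invertible (whiskL v ga) ->
  invertible ga.
Proof. intros Hpl X h k ga S T Iu Iv. pose proof Hpl as ((E1&E2&Hi)&_&H2).
  destruct (H2 X k h (inv (whiskL u ga)) (inv (whiskL v ga))) as (ga2 & (S2 & T2 & U2 & V2) & _);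
    try st.
  - rewrite <- inv_whiskL by auto. symmetry. apply conj_lemma; try inv_tac; try st.
    apply cone_nat; auto.
  - exists ga2. split; [st | split; [st | split]].
    + apply (pl_cell_unique Hpl (h := h) (k := h)); try st.
      rewrite whiskL_vcomp by st. rewrite U2, vinv_l by auto. rewrite whiskL_id2. st.
      rewrite whiskL_vcomp by st. rewrite V2, vinv_l by auto. rewrite whiskL_id2. st.
    + apply (pl_cell_unique Hpl (h := k) (k := k)); try st.
      rewrite whiskL_vcomp by st. rewrite U2, vinv_r by auto. rewrite whiskL_id2. st.
      rewrite whiskL_vcomp by st. rewrite V2, vinv_r by auto. rewrite whiskL_id2. st.
Qed.


Lemma pl_equiv A B P (f : Hom C A B) (u : Hom C P A) (v : Hom C P B) (lam : Cell C P B) :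
  is_arrow_pseudolimit f u v lam -> equivalence u.
Proof. intros Hpl. pose proof Hpl as ((E1&E2&Hi)&H1&H2).
  destruct (H1 A (id1 A) f (id2 f)) as (s & (Us & Vs & Ls) & _); [st | st | apply invertible_id2 | ].
  destruct (H2 P (id1 P) (comp1 s u) (id2 u) lam) as (eta & (S&T&Ue&Ve) & _); try st.
  - rewrite whiskL_id2, whiskR_id1, vid_l by st.
    rewrite <- whiskR_whiskR, Ls, whiskR_id2, vid_l by st. reflexivity.
  - exists s, eta, (id2 (id1 A)). split; [st|split;[st|split;[|split;[st|split;[st|]]]]].
    + apply (pl_reflect_inv Hpl (h := id1 P) (k := comp1 s u)); try st.
      all: first [rewrite Ue; apply invertible_id2 | rewrite Ve; auto].
    + apply invertible_id2.
Qed.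

Lemma pl_iso A B P (f : Hom C A B) (u : Hom C P A) (v : Hom C P B) (lam : Cell C P B) :
  is_arrow_pseudolimit f u v lam ->
  forall X (psi : Hom C X P) (phi : Hom C P X), comp1 psi phi = id1 P -> comp1 phi psi = id1 X ->
  is_arrow_pseudolimit f (comp1 u psi) (comp1 v psi) (whiskR lam psi).
Proof. intros Hpl X psi phi I1 I2. pose proof Hpl as ((E1&E2&Hi)&H1&H2).
  split; [|split].
  - split; [st|split;[st|]]. apply invertible_whiskR; auto.
  - intros Y p q th Sth Tth Ith.
    destruct (H1 Y p q th) as (k & (Uk&Vk&Lk) & Uniq); try st; auto.
    exists (comp1 phi k). split; [split; [st|split;[st|]]|].
    + rewrite whiskR_whiskR. replace (comp1 psi (comp1 phi k)) with k by st. exact Lk.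
    + intros h' Uh Vh Lh. rewrite whiskR_whiskR in Lh.
      assert (Hk : comp1 psi h' = k) by (apply Uniq; try st; exact Lh).
      subst k. st.
  - intros Y h k al be Sa Ta Sb Tb Comp. rewrite !whiskR_whiskR in Comp.
    destruct (H2 Y (comp1 psi h) (comp1 psi k) al be) as (ga & (S&T&Ug&Vg) & Uniq); try st; auto.
    exists (whiskL phi ga). split; [split;[st|split;[st|split]]|].
    + rewrite whiskL_whiskL. replace (comp1 (comp1 u psi) phi) with u by st. exact Ug.
    + rewrite whiskL_whiskL. replace (comp1 (comp1 v psi) phi) with v by st. exact Vg.
    + intros ga' S' T' U' V'.
      assert (Hg : whiskL psi ga' = ga) by (apply Uniq; try st; rewrite whiskL_whiskL; auto).
      rewrite <- Hg, whiskL_whiskL. replace (comp1 phi psi) with (id1 X) by st.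
      rewrite whiskL_id1. reflexivity.
Qed.

End PL.

Set Implicit Arguments.
Unset Strict Implicit.

Section Eqv.
Context {C : TwoCat}.

Lemma unit_nat B (m : Hom C B B) (e : Cell C B B) X (a : Cell C X B) :
  src2 e = id1 B -> tgt2 e = m ->
  vcomp (whiskL m a) (whiskR e (src2 a)) = vcomp (whiskR e (tgt2 a)) a.
Proof. intros E1 E2. rewrite <- E2. rewrite whisk_nat, E1, whiskL_id1. reflexivity. Qed.

Lemma faithful_unit B (m : Hom C B B) (e : Cell C B B) X (a b : Cell C X B) :
  src2 e = id1 B -> tgt2 e = m -> invertible e ->
  src2 a = src2 b -> tgt2 a = tgt2 b -> whiskL m a = whiskL m b -> a = b.
Proof. intros E1 E2 Hi S T W.
  apply (vcancel_l (a := whiskR e (tgt2 a))); try st. apply invertible_whiskR; auto.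
  rewrite <- (unit_nat a E1 E2). rewrite T, <- (unit_nat b E1 E2), W, S. reflexivity. Qed.

Lemma equiv_faithful A B (f : Hom C A B) (g : Hom C B A) (eta : Cell C A A) X (a b : Cell C X A) :
  src2 eta = id1 A -> tgt2 eta = comp1 g f -> invertible eta ->
  src2 a = src2 b -> tgt2 a = tgt2 b -> whiskL f a = whiskL f b -> a = b.
Proof. intros E1 E2 Hi S T W. apply (faithful_unit E1 E2 Hi S T).
  rewrite <- !whiskL_whiskL, W. reflexivity. Qed.

Lemma equiv_full A B (f : Hom C A B) (g : Hom C B A) (eta : Cell C A A) (eps : Cell C B B)
  X (x y : Hom C X A) (al : Cell C X B) :
  src2 eta = id1 A -> tgt2 eta = comp1 g f -> invertible eta ->
  src2 eps = comp1 f g -> tgt2 eps = id1 B -> invertible eps ->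
  src2 al = comp1 f x -> tgt2 al = comp1 f y ->
  let ga := vcomp (whiskR (inv eta) y) (vcomp (whiskL g al) (whiskR eta x)) in
  src2 ga = x /\ tgt2 ga = y /\ whiskL f ga = al.
Proof. intros E1 E2 Hi F1 F2 Hi' Sa Ta ga.
  assert (Sg : src2 ga = x) by (unfold ga; st).
  assert (Tg : tgt2 ga = y) by (unfold ga; st).
  split; [exact Sg | split; [exact Tg|]].
  assert (Hg : whiskL (comp1 g f) ga = whiskL g al).
  { apply (vcancel_r (a := whiskR eta x)); try st. apply invertible_whiskR; auto.
    pose proof (unit_nat ga E1 E2) as N. rewrite Sg, Tg in N. rewrite N.
    unfold ga. rewrite <- inv_whiskR by auto. rewrite vinv_r_assoc; try st.
    apply invertible_whiskR; auto. }
  apply (faithful_unit (m := comp1 f g) (e := inv eps)); try st; try inv_tac.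
  rewrite <- !whiskL_whiskL, (whiskL_whiskL g f ga), Hg. reflexivity.
Qed.
End Eqv.

Set Implicit Arguments.
Unset Strict Implicit.

Section Main.
Context {L K : TwoCat} (U : TwoFunctor L K).
Unset Implicit Arguments.
Context (HK : has_arrow_pseudolimits K) (Hel : equivalence_lifting U)
        (Hdi : hom_discrete_isofibration U).
Set Implicit Arguments.

Lemma lift_unique A B (a b : Cell L A B) : invertible a -> invertible b ->
  tgt2 a = tgt2 b -> F2 U a = F2 U b -> a = b.
Proof. intros Ia Ib T F.
  destruct (Hdi _ _ (tgt2 b) (F2 U b)) as (c & _ & Uq).
  - apply F2_tgt.
  - apply F2_invertible; auto.
  - rewrite (Uq a), (Uq b); auto. Qed.

Lemma lift_pl A B (f : Hom L A B) : exists Pb (ub : Hom L Pb A) (vb : Hom L Pb B) lamb,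
  equivalence ub /\ src2 lamb = vb /\ tgt2 lamb = comp1 f ub /\ invertible lamb /\
  is_arrow_pseudolimit (F1 U f) (F1 U ub) (F1 U vb) (F2 U lamb).
Proof.
  destruct (HK _ _ (F1 U f)) as (P & u & v & lam & Hpl).
  destruct (Hel _ _ _ (pl_equiv Hpl)) as (Pb & ub & Heq & Ex).
  assert (e := f_equal (@projT1 _ _) Ex). simpl in e. subst P.
  apply inj_pair2 in Ex. subst u.
  pose proof Hpl as ((E1&E2&Hi)&_).
  destruct (Hdi _ _ (comp1 f ub) lam) as (lamb & (T & Ib & Fl) & _); [st | auto |].
  exists Pb, ub, (src2 lamb), lamb. split; [auto|split;[auto|split;[auto|split;[auto|]]]].
  rewrite Fl. replace (F1 U (src2 lamb)) with v. exact Hpl.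
  rewrite <- F2_src, Fl. auto.
Qed.


Lemma L_pl A B (f : Hom L A B) Pb (ub : Hom L Pb A) (vb : Hom L Pb B) lamb :
  equivalence ub -> src2 lamb = vb -> tgt2 lamb = comp1 f ub -> invertible lamb ->
  is_arrow_pseudolimit (F1 U f) (F1 U ub) (F1 U vb) (F2 U lamb) ->
  is_arrow_pseudolimit f ub vb lamb.
Proof.
  intros (g & eta & eps & Se & Te & Ie & Sp & Tp & Ip) S T I Hpl.
  pose proof Hpl as (_ & H1 & H2).
  split; [auto | split].
  - intros X p q th Sth Tth Ith.
    destruct (H1 (F0 U X) (F1 U p) (F1 U q) (F2 U th)) as (k & (Uk & Vk & Lk) & Uniq);
      [st | st | apply F2_invertible; auto | ].
    assert (Itau : invertible (whiskR (inv eps) p)) by inv_tac.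
    assert (Itau' : invertible (vcomp (inv (whiskR lamb (comp1 g p)))
                                 (vcomp (whiskL f (whiskR (inv eps) p)) th))) by inv_tac.
    destruct (H2 (F0 U X) k (F1 U (comp1 g p)) (F2 U (whiskR (inv eps) p))
      (F2 U (vcomp (inv (whiskR lamb (comp1 g p))) (vcomp (whiskL f (whiskR (inv eps) p)) th))))
      as (sg & (Ss & Ts & Us & Vs) & _); try st.
    { rewrite Lk. rewrite <- F2_whiskL, <- F2_whiskR, <- !F2_vcomp by st. f_equal.
      rewrite vinv_r_assoc; [reflexivity | inv_tac | st]. }
    assert (Is : invertible sg).
    { apply (pl_reflect_inv Hpl (h:=k) (k:=F1 U (comp1 g p))); auto.
      rewrite Us; apply F2_invertible; auto. rewrite Vs; apply F2_invertible; auto. }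
    destruct (Hdi _ _ (comp1 g p) sg) as (sb & (Tb & Ib & Fb) & _); [st | auto |].
    assert (Fh : F1 U (src2 sb) = k) by (rewrite <- F2_src, Fb; auto).
    assert (Hu : whiskL ub sb = whiskR (inv eps) p).
    { apply lift_unique; [inv_tac | auto | st | rewrite F2_whiskL, Fb; auto]. }
    assert (Hv : whiskL vb sb = vcomp (inv (whiskR lamb (comp1 g p)))
                                 (vcomp (whiskL f (whiskR (inv eps) p)) th)).
    { apply lift_unique; [inv_tac | auto | st | rewrite F2_whiskL, Fb; auto]. }
    assert (Eu : comp1 ub (src2 sb) = p) by (rewrite <- src_whiskL, Hu; st).
    assert (Ev : comp1 vb (src2 sb) = q) by (rewrite <- src_whiskL, Hv; st).
    exists (src2 sb).
    split; [split; [auto | split; [auto|]] | ].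
    + apply lift_unique; [inv_tac | auto | st | ].
      rewrite F2_whiskR, Fh. exact Lk.
    + intros h' U' V' L'.
      assert (Fh' : F1 U h' = k).
      { apply Uniq. rewrite <- F1_comp, U'; auto. rewrite <- F1_comp, V'; auto.
        rewrite <- F2_whiskR, L'; auto. }
      assert (Hphi : vcomp (whiskR (inv eta) (src2 sb)) (whiskR eta h') = id2 (src2 sb)).
      { apply lift_unique; [inv_tac | apply invertible_id2 | st | ].
        rewrite F2_vcomp by st. rewrite !F2_whiskR, Fh, Fh'.
        rewrite <- whiskR_vcomp by st. rewrite <- F2_vcomp by st. rewrite vinv_l by auto.
        rewrite !F2_id, whiskR_id2, Fh. st. }
      transitivity (src2 (vcomp (whiskR (inv eta) (src2 sb)) (whiskR eta h'))).
      st. rewrite Hphi, src_id2. reflexivity.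
  - intros X h k al be Sa Ta Sb Tb Comp.
    pose proof (equiv_full Se Te Ie Sp Tp Ip Sa Ta) as HH. cbv zeta in HH.
    destruct HH as (Sg & Tg & Ug).
    set (ga := vcomp (whiskR (inv eta) k) (vcomp (whiskL g al) (whiskR eta h))) in *.
    clearbody ga.
    exists ga. split; [split; [exact Sg|split;[exact Tg|split;[exact Ug|]]]|].
    + apply (vcancel_l (a := whiskR lamb k)); [inv_tac | st | st | ].
      rewrite <- Comp, <- Ug. symmetry. apply cone_nat; auto.
    + intros ga' S' T' U' V'. apply (equiv_faithful Se Te Ie); try st; congruence.
Qed.


Lemma has_pl_L : has_arrow_pseudolimits L.
Proof. intros A B f. destruct (lift_pl f) as (Pb & ub & vb & lamb & Heq & S & T & I & Hpl).
  exists Pb, ub, vb, lamb. apply L_pl; auto. Qed.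

Lemma preserves : preserves_arrow_pseudolimits U.
Proof. intros A B f X u' v' lam' HX.
  destruct (lift_pl f) as (Pb & ub & vb & lamb & Heq & S & T & I & HPK).
  assert (HP : is_arrow_pseudolimit f ub vb lamb) by (apply L_pl; auto).
  pose proof HX as ((S'&T'&I')&H1X&_). pose proof HP as (_&H1P&_).
  destruct (H1X Pb ub vb lamb) as (phi & (U1&V1&L1) & Uq1); auto.
  destruct (H1P X u' v' lam') as (psi & (U2&V2&L2) & Uq2); auto.
  assert (E1 : comp1 psi phi = id1 Pb).
  { destruct (H1P Pb ub vb lamb) as (h & _ & Uq); auto.
    rewrite (Uq (comp1 psi phi)), (Uq (id1 Pb)); try st.
    - rewrite whiskR_id1. reflexivity.
    - rewrite <- whiskR_whiskR, L2, L1. reflexivity. }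
  assert (E2 : comp1 phi psi = id1 X).
  { destruct (H1X X u' v' lam') as (h & _ & Uq); auto.
    rewrite (Uq (comp1 phi psi)), (Uq (id1 X)); try st.
    - rewrite whiskR_id1. reflexivity.
    - rewrite <- whiskR_whiskR, L1, L2. reflexivity. }
  pose proof (pl_iso HPK (psi := F1 U psi) (phi := F1 U phi)) as HH.
  rewrite <- !F1_comp, E1, E2, !F1_id in HH.
  rewrite <- U2, <- V2, <- L2, F2_whiskR. apply HH; reflexivity.
Qed.

Definition liftb (A B : Ob L) (f : Hom L A B)
  (clK : forall X : Ob K, Hom K X (F0 U A) -> Cell K X (F0 U B) -> Hom K X (F0 U A) * Cell K X (F0 U A))
  (X : Ob L) (g : Hom L X A) (al : Cell L X B) : Cell L X A :=
  epsilon (inhabits (id2 g)) (fun b => tgt2 b = g /\ invertible b /\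
     F2 U b = inv (snd (clK (F0 U X) (F1 U g) (F2 U al)))).
Arguments liftb {A B} f clK X g al.

Lemma part3 : normal_isofibration_property K -> normal_isofibration_property L.
Proof.
  intros HnK A B f Hf. split; [exact Hf|].
  destruct (lift_pl f) as (Pb & ub & vb & lamb & Heq & S & T & I & Hpl).
  destruct (Hf Pb ub vb (inv lamb)) as (r & al' & Sa & Ta & Ia & Wa); [st | st | inv_tac |].
  assert (HrK : rep_isofibration (F1 U f)).
  { intros X g h al Sal Tal Ial.
    pose proof Hpl as (_ & H1 & _).
    destruct (H1 X g h (inv al)) as (k & (Uk & Vk & Lk) & _); [st | st | inv_tac |].
    exists (comp1 (F1 U r) k), (whiskR (F2 U al') k).
    split; [st | split; [st | split]].
    - apply invertible_whiskR. apply F2_invertible; auto.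
    - rewrite <- whiskR_whiskL, <- F2_whiskL, Wa, F2_inv by auto.
      rewrite <- inv_whiskR by (apply F2_invertible; auto). rewrite Lk, inv_inv by auto.
      reflexivity. }
  destruct (HnK _ _ _ HrK) as (_ & clK & (HclK1 & HclK2) & Hnorm).
  assert (Spec : forall X g al, src2 al = comp1 f g -> invertible al ->
    tgt2 (liftb f clK X g al) = g /\ invertible (liftb f clK X g al) /\
    F2 U (liftb f clK X g al) = inv (snd (clK (F0 U X) (F1 U g) (F2 U al)))).
  { intros X g al Sal Ial. unfold liftb. apply epsilon_spec.
    destruct (HclK1 (F0 U X) (F1 U g) (F2 U al)) as (S1 & T1 & I1 & W1);
      [st | apply F2_invertible; auto |].
    destruct (Hdi _ _ g (inv (snd (clK (F0 U X) (F1 U g) (F2 U al))))) as (b & (Tb & Ib & Fb) & _);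
      [st | inv_tac |].
    exists b; auto. }
  exists (fun X g al => (src2 (liftb f clK X g al), inv (liftb f clK X g al))).
  split; [split|].
  - intros X g al Sal Ial. cbn [fst snd].
    destruct (Spec X g al Sal Ial) as (Tb & Ib & Fb).
    destruct (HclK1 (F0 U X) (F1 U g) (F2 U al)) as (S1 & T1 & I1 & W1);
      [st | apply F2_invertible; auto |].
    split; [st | split; [st | split; [inv_tac|]]].
    rewrite <- inv_whiskL by auto. transitivity (inv (inv al)); [f_equal | apply inv_inv; auto].
    apply lift_unique; [inv_tac | inv_tac | st |].
    rewrite F2_whiskL, Fb, F2_inv by auto. rewrite <- inv_whiskL by auto. rewrite W1. reflexivity.
  - intros Y X k g al Sal Ial. cbn [fst snd].
    destruct (Spec X g al Sal Ial) as (Tb & Ib & Fb).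
    destruct (HclK1 (F0 U X) (F1 U g) (F2 U al)) as (S1 & T1 & I1 & W1);
      [st | apply F2_invertible; auto |].
    assert (Sal' : src2 (whiskR al k) = comp1 f (comp1 g k)) by st.
    assert (Ial' : invertible (whiskR al k)) by inv_tac.
    destruct (Spec Y (comp1 g k) (whiskR al k) Sal' Ial') as (Tb' & Ib' & Fb').
    assert (Hb : liftb f clK Y (comp1 g k) (whiskR al k) = whiskR (liftb f clK X g al) k).
    { apply lift_unique; [auto | inv_tac | st |].
      rewrite Fb', !F2_whiskR, Fb, F1_comp.
      rewrite HclK2 by (st || (apply F2_invertible; auto)). cbn [snd].
      rewrite inv_whiskR by auto. reflexivity. }
    rewrite Hb. f_equal. st. apply inv_whiskR; auto.
  - intros X g. cbn [snd].
    assert (Sid : src2 (id2 (comp1 f g)) = comp1 f g) by st.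
    destruct (Spec X g _ Sid (invertible_id2 _)) as (Tb & Ib & Fb).
    assert (Hb : liftb f clK X g (id2 (comp1 f g)) = id2 g).
    { apply lift_unique; [auto | apply invertible_id2 | st |].
      rewrite Fb, F2_id, F1_comp, Hnorm, inv_id2, F2_id. reflexivity. }
    rewrite Hb. apply inv_id2.
Qed.

End Main.

Theorem proposition3p20 (L K : TwoCat) (U : TwoFunctor L K) :
  has_arrow_pseudolimits K ->
  equivalence_lifting U ->
  hom_discrete_isofibration U ->
  has_arrow_pseudolimits L /\ preserves_arrow_pseudolimits U /\
  (normal_isofibration_property K -> normal_isofibration_property L).
Proof.
  intros HK Hel Hdi. split; [|split].
  - eapply has_pl_L; eauto.
  - eapply preserves; eauto.
  - eapply part3; eauto.
Qed.
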